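(* Let $n\ge1$. A permutation $w\in\mathfrak S_n$ has $\operatorname{exc}(w)=k$ if and only if $w$ can be written as a product of $k$ permutations each having exactly one excedance, and not as a product of fewer such permutations; that is, $\operatorname{exc}=\ell_T$ where $T=\{t\in\mathfrak S_n:\operatorname{exc}(t)=1\}$. Furthermore, $\operatorname{exc}$ is subadditive, and the poset $(\mathfrak S_n,\le_{\operatorname{exc}})$, where $x\le_{\operatorname{exc}}y$ iff $\operatorname{exc}(x)+\operatorname{exc}(x^{-1}y)=\operatorname{exc}(y)$, is graded by $\operatorname{exc}$ (every cover relation $x\lessdot y$ has $\operatorname{exc}(y)=\operatorname{exc}(x)+1$), the number of elements of rank $k$ is the Eulerian number counting permutations of $[n]$ with $k$ excedances, and it has a unique maximal element, namely $23\cdots n1=(1\,2\,\cdots\,n)$.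
   Context: For $w\in\mathfrak S_n$, $\operatorname{exc}(w)=\#\{i\in[n-1]: w(i)>i\}$ is the number of excedances. Permutations are composed as functions. $\ell_T(x)$ is the minimum number of elements of $T$ whose product is $x$. *)

(* Defs.v *)
From mathcomp Require Import all_boot all_fingroup.
Set Implicit Arguments. Unset Strict Implicit. Unset Printing Implicit Defensive.
Local Open Scope group_scope.

(* Permutations of [n] are {perm 'I_n}; the point i of 'I_n stands for i+1 of [n]. *)

(* Composition as functions: (fcomp x y) i = x (y i).  Note mathcomp's x * y is
   "first x then y", so fcomp x y = y * x. *)
Definition fcomp n (x y : {perm 'I_n}) : {perm 'I_n} := y * x.

Definition exc n (w : {perm 'I_n}) : nat :=
  #|[set i : 'I_n | (i < n.-1)%N && (i < w i)%N]|.

Definition one_exc n (t : {perm 'I_n}) : bool := exc t == 1%N.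

Definition fprod n (s : seq {perm 'I_n}) : {perm 'I_n} := foldr (@fcomp n) 1 s.

Definition prod_of_T n (k : nat) (x : {perm 'I_n}) : Prop :=
  exists s : seq {perm 'I_n}, [/\ size s = k, all (@one_exc n) s & fprod s = x].

Definition ellT_is n (x : {perm 'I_n}) (k : nat) : Prop :=
  prod_of_T k x /\ forall m, (m < k)%N -> ~ prod_of_T m x.

Definition le_exc n (x y : {perm 'I_n}) : bool :=
  (exc x + exc (fcomp x^-1 y) == exc y)%N.

Definition covers_exc n (x y : {perm 'I_n}) : Prop :=
  [/\ le_exc x y, x != y &
      forall z, le_exc x z -> le_exc z y -> z = x \/ z = y].

Definition maximal_exc n (m : {perm 'I_n}) : Prop :=
  forall y, le_exc m y -> y = m.

Definition eulerian (n k : nat) : nat := #|[set w : {perm 'I_n} | exc w == k]|.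

(* the cycle (1 2 ... n) = 23...n1, i.e. i |-> i+1 mod n *)
Definition long_cycle n : {perm 'I_n} := perm (@ordS_inj n).

(* Main.v *)
Require Import Defs.
From mathcomp Require Import all_boot all_fingroup.
From mathcomp Require Import zify.
Set Implicit Arguments. Unset Strict Implicit.
Local Open Scope group_scope.

Lemma excE n (w : {perm 'I_n}) : exc w = #|[set i : 'I_n | (i < w i)%N]|.
Proof.
rewrite /exc; apply: eq_card => i; rewrite !inE.
case: (ltnP i (w i)) => h; rewrite ?andbF ?andbT //.
have := ltn_ord (w i); move=> ?; apply/idP; lia.
Qed.

Lemma exc0 n (w : {perm 'I_n}) : exc w = 0%N -> w = 1.
Proof.
rewrite excE => /eqP; rewrite cards_eq0 => /eqP H.
have le i : (w i <= i)%N.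
  by move/setP: H => /(_ i); rewrite !inE => /negbT; rewrite -leqNgt.
suff K : forall k (i : 'I_n), (i < k)%N -> w i = i.
  by apply/permP => i; rewrite perm1; apply: (K i.+1).
elim=> [//|k IH] i Hi.
case: (ltngtP (w i) i) => [lt||/val_inj //]; last by have := le i; lia.
have e : w (w i) = w i by apply: IH; lia.
by have := perm_inj e.
Qed.

Lemma exc1 n : exc (1 : {perm 'I_n}) = 0%N.
Proof. rewrite excE; apply/eqP; rewrite cards_eq0; apply/eqP/setP=> i.
by rewrite !inE perm1 ltnn. Qed.

Lemma fcompE n (x y : {perm 'I_n}) i : fcomp x y i = x (y i).
Proof. by rewrite /fcomp permM. Qed.

Lemma subadd n (x y : {perm 'I_n}) : (exc (fcomp x y) <= exc x + exc y)%N.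
Proof.
rewrite !excE.
have sub : [set i : 'I_n | (i < fcomp x y i)%N] \subset
   [set i : 'I_n | (i < y i)%N] :|: (y @^-1: [set i : 'I_n | (i < x i)%N]).
  apply/subsetP=> i; rewrite !inE fcompE => h.
  apply/orP; case: (ltnP i (y i)) => h2; [by left | right; lia].
apply: (leq_trans (subset_leq_card sub)).
rewrite cardsU card_preimset; last exact: perm_inj.
rewrite addnC; exact: leq_subr.
Qed.

Lemma card1_set n (A : {set 'I_n}) a : #|A| = 1%N -> a \in A -> A = [set a].
Proof.
move/eqP/cards1P=> [x ->]; rewrite inE => /eqP -> //.
Qed.

Lemma decomp n : forall k (w : {perm 'I_n}) (a : 'I_n), (w a < k)%N -> (a < w a)%N ->
  (forall p : 'I_n, (a < p)%N -> (w p <= p)%N) ->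
  exists w' t : {perm 'I_n}, [/\ fcomp w' t = w, (exc w').+1 = exc w, exc t = 1%N,
     t a = w a & forall p, t p != p -> w p != p].
Proof.
elim=> [//|k IH] w a Hk Ha Hp.
set m := w a.
have am : a != m by apply/eqP=> e; move: Ha; rewrite -/m -e ltnn.
have wmm : w m != m.
  apply/eqP=> e; have : w m = w a by rewrite e.
  by move/perm_inj=> e2; move: am; rewrite e2 eqxx.
have wm_le : (w m <= m)%N by apply: Hp.
set tau := tperm a m.
have w2E i : (tau * w) i = w (tau i) by rewrite permM.
case: (leqP (w m) a) => hwm.
- exists (tau * w), tau; split.
  + by rewrite /fcomp mulgA tperm2 mul1g.
  + rewrite !excE.
    have -> : [set i : 'I_n | (i < w i)%N] = a |: [set i : 'I_n | (i < (tau * w)%g i)%N].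
      apply/setP=> i; rewrite !inE w2E.
      case: (eqVneq i a) => [->|ia] /=; first by rewrite Ha.
      case: (eqVneq i m) => [->|im]; first by rewrite tpermR /m ltnn; apply/negbTE; rewrite -leqNgt.
      by rewrite tpermD // eq_sym.
    rewrite cardsU1 !inE w2E tpermL.
    have -> : (a < w m)%N = false by apply/negbTE; rewrite -leqNgt.
    by [].
  + rewrite excE; apply/eqP/cards1P; exists a; apply/setP=> i; rewrite !inE.
    case: (eqVneq i a) => [->|ia]; first by rewrite tpermL Ha.
    case: (eqVneq i m) => [->|im].
      by rewrite tpermR; apply/negbTE; rewrite -leqNgt; exact: ltnW Ha.
    by rewrite tpermD ?ltnn ?(negbTE ia) // eq_sym.
  + by rewrite tpermL.
  + move=> p; case: (eqVneq p a) => [->|pa]; first by move=> _; apply/eqP=> e; move: Ha; rewrite e ltnn.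
    case: (eqVneq p m) => [->|pm]; first by move=> _.
    by rewrite tpermD ?eqxx // eq_sym.
- have lt_wm : (w m < m)%N by rewrite ltn_neqAle wmm wm_le.
  have [w3 [t3 [E3 X3 T3 A3 F3]]] : exists w' t : {perm 'I_n},
     [/\ fcomp w' t = tau * w, (exc w').+1 = exc (tau * w), exc t = 1%N,
     t a = (tau * w) a & forall p, t p != p -> (tau * w) p != p].
    apply: IH.
    + by rewrite w2E tpermL; move: lt_wm Hk; rewrite /m; lia.
    + by rewrite w2E tpermL.
    + move=> p ap; rewrite w2E.
      case: (eqVneq p m) => [->|pm]; first by rewrite tpermR.
      have pa : a != p by apply/eqP=> e; move: ap; rewrite e ltnn.
      rewrite tpermD // ?Hp // eq_sym //.
  have t3m : t3 m = m.
    by case: (eqVneq (t3 m) m) => [//|/F3]; rewrite w2E tpermR eqxx.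
  have Et3 : [set i : 'I_n | (i < t3 i)%N] = [set a].
    apply: card1_set; first by rewrite -excE.
    by rewrite inE A3 w2E tpermL.
  exists w3; exists (tau * t3)%g; split.
  + by rewrite /fcomp -mulgA -/(fcomp w3 t3) E3 mulgA tperm2 mul1g.
  + rewrite X3 !excE; apply: eq_card => i; rewrite !inE w2E.
    case: (eqVneq i a) => [->|ia]; first by rewrite tpermL hwm Ha.
    case: (eqVneq i m) => [->|im]; first by rewrite tpermR -/m ltnn; apply/esym/negbTE; rewrite -leqNgt; exact: ltnW lt_wm.
    by rewrite tpermD // eq_sym.
  + rewrite excE; apply/eqP/cards1P; exists a; apply/setP=> i; rewrite !inE permM.
    case: (eqVneq i a) => [->|ia]; first by rewrite tpermL t3m Ha.
    case: (eqVneq i m) => [->|im].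
      rewrite tpermR A3 w2E tpermL; apply/negbTE; rewrite -leqNgt; exact: ltnW.
    rewrite tpermD 1?eq_sym //; move/setP: Et3 => /(_ i); rewrite !inE => ->.
    by rewrite (negbTE ia).
  + by rewrite permM tpermL t3m.
  + move=> p; rewrite permM.
    case: (eqVneq p a) => [->|pa]; first by move=> _; apply/eqP=> e; move: Ha; rewrite e ltnn.
    case: (eqVneq p m) => [->|pm]; first by move=> _.
    have tp : tau p = p by rewrite tpermD // eq_sym.
    by rewrite tp => H; have := F3 _ H; rewrite w2E tp.
Qed.

Lemma decomp1 n (w : {perm 'I_n}) d : exc w = d.+1 ->
  exists w' t : {perm 'I_n}, [/\ fcomp w' t = w, exc w' = d & exc t = 1%N].
Proof.
rewrite excE => Hd.
have : [set i : 'I_n | (i < w i)%N] != set0 by rewrite -card_gt0 Hd.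
case/set0Pn=> a0; rewrite inE => Ha0.
case: (@arg_maxnP _ a0 (fun i : 'I_n => (i < w i)%N) (fun i => nat_of_ord i) Ha0).
move=> a Ha Hmax.
have Hp : forall p : 'I_n, (a < p)%N -> (w p <= p)%N.
  move=> p ap; rewrite leqNgt; apply/negP=> /Hmax; lia.
have [w' [t [E X T _ _]]] := @decomp n (w a).+1 w a (leqnn _) Ha Hp.
exists w', t; split=> //.
by move: X; rewrite [exc w]excE Hd => -[].
Qed.

Lemma fprod_rcons n (s : seq {perm 'I_n}) t : Defs.fprod (rcons s t) = fcomp (Defs.fprod s) t.
Proof.
rewrite /fcomp; elim: s => [|x s IH] /=; first by rewrite /fcomp mulg1 mul1g.
by rewrite /fcomp IH mulgA.
Qed.

Lemma prod_T n d (w : {perm 'I_n}) : exc w = d -> prod_of_T d w.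
Proof.
elim: d w => [|d IH] w Hw.
  by exists [::]; rewrite (exc0 Hw).
have [w' [t [E X T]]] := decomp1 Hw.
have [s [S A P]] := IH _ X.
exists (rcons s t); split.
- by rewrite size_rcons S.
- by rewrite all_rcons /one_exc T eqxx.
- by rewrite fprod_rcons P.
Qed.

Lemma T_bound n m (w : {perm 'I_n}) : prod_of_T m w -> (exc w <= m)%N.
Proof.
move=> [s [<- A <-]]; elim: s A => [|t s IH] /=; first by rewrite exc1.
move=> /andP [/eqP T A].
apply: leq_trans (subadd _ _) _; rewrite T add1n ltnS; exact: IH.
Qed.

Lemma excinv n (w : {perm 'I_n}) : exc w = #|[set j : 'I_n | ((w^-1)%g j < j)%N]|.
Proof.
rewrite excE -[RHS](card_preimset _ (@perm_inj _ w)); apply: eq_card => i.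
by rewrite !inE permK.
Qed.

Lemma lcinv n (x : 'I_n) : ((long_cycle n)^-1)%g x = ord_pred x.
Proof.
apply: (@perm_inj _ (long_cycle n)); rewrite permKV /long_cycle permE ord_predK //.
Qed.

Lemma cyc_id n (hn : (0 < n)%N) (m : {perm 'I_n}) :
  (exc m + exc (fcomp m^-1 (long_cycle n)))%N = n.-1.
Proof.
set z : 'I_n := Ordinal hn.
have cA : #|[set j : 'I_n | m j != z]| = n.-1.
  have -> : n.-1 = #|[set~ z]| by rewrite cardsC1 card_ord.
  rewrite -[RHS](card_preimset _ (@perm_inj _ m)).
  by apply: eq_card => j; rewrite !inE.
rewrite -cA -(cardsID [set j : 'I_n | (j < m j)%N]) excE excinv.
congr (_ + _)%N; apply: eq_card => j; rewrite !inE.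
- case: (ltnP j (m j)) => hh; rewrite ?andbF ?andbT //.
  apply/esym/eqP=> e; move: hh; rewrite e /=; lia.
- rewrite /fcomp invMg invgK permM lcinv /=.
  have := ltn_ord (m j); have := ltn_ord j.
  case: (eqVneq (m j) z) => [->|mz] /=.
    move=> hj _; rewrite add0n modn_small; [apply/negbTE; rewrite -leqNgt; lia | lia].
  move=> hj hm.
  have mpos : (0 < m j)%N by move: mz; rewrite -val_eqE /=; lia.
  have -> : ((m j + n).-1 = (m j).-1 + n)%N by lia.
  rewrite modnDr modn_small; last by lia.
  rewrite -leqNgt; apply/idP/idP; lia.
Qed.

Lemma fcompK n (x w : {perm 'I_n}) : fcomp x^-1 (fcomp x w) = w.
Proof. by rewrite /fcomp -mulgA mulgV mulg1. Qed.

Lemma fcompKV n (x z : {perm 'I_n}) : fcomp x (fcomp x^-1 z) = z.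
Proof. by rewrite /fcomp -mulgA mulVg mulg1. Qed.

Lemma exc0_eq n (x y : {perm 'I_n}) : exc (fcomp x^-1 y) = 0%N -> x = y.
Proof.
move/exc0; rewrite /fcomp => e; apply/eqP; rewrite eq_sym eq_mulgV1 e //.
Qed.

Lemma le_bound n (hn : (0 < n)%N) (y : {perm 'I_n}) : (exc y <= n.-1)%N.
Proof. by rewrite -(cyc_id hn y) leq_addr. Qed.

Unset Implicit Arguments.
Theorem mainTheorem17 (n : nat) (hn : (0 < n)%N) :
  (forall (w : {perm 'I_n}) (k : nat), exc w = k <-> ellT_is w k) /\
  (forall x y : {perm 'I_n}, (exc (fcomp x y) <= exc x + exc y)%N) /\
  (forall x : {perm 'I_n}, le_exc x x) /\
  (forall x y : {perm 'I_n}, le_exc x y -> le_exc y x -> x = y) /\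
  (forall x y z : {perm 'I_n}, le_exc x y -> le_exc y z -> le_exc x z) /\
  (forall x y : {perm 'I_n}, covers_exc x y -> exc y = (exc x).+1) /\
  (forall k : nat, #|[set w : {perm 'I_n} | exc w == k]| = eulerian n k) /\
  maximal_exc (long_cycle n) /\
  (forall m : {perm 'I_n}, maximal_exc m -> m = long_cycle n).
Proof.
split.
  move=> w k; split.
    move=> <-; split; first exact: prod_T.
    by move=> m lt /T_bound; rewrite leqNgt lt.
  move=> [P Min]; apply/eqP; rewrite eqn_leq T_bound //= leqNgt; apply/negP => h.
  exact: Min _ h (prod_T (erefl _)).
split; first exact: subadd.
split; first by move=> x; rewrite /le_exc /fcomp mulgV exc1 addn0.
split.
  move=> x y /eqP H1 /eqP H2; apply: exc0_eq; lia.
split.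
  move=> x y z /eqP H1 /eqP H2; apply/eqP.
  have e1 : fcomp x^-1 z = fcomp (fcomp x^-1 y) (fcomp y^-1 z).
    by rewrite /fcomp -mulgA (mulgA y^-1) mulVg mul1g.
  have s1 := subadd (fcomp x^-1 y) (fcomp y^-1 z); rewrite -e1 in s1.
  have s2 := subadd x (fcomp x^-1 z); rewrite fcompKV in s2.
  lia.
split.
  move=> x y [/eqP Hle Hne Hmid].
  move Hd: (exc (fcomp x^-1 y)) => d; rewrite Hd in Hle.
  case: d Hd Hle => [|d] Hd Hle.
    by move: Hne; rewrite (exc0_eq Hd) eqxx.
  case: d Hd Hle => [|d] Hd Hle; first lia.
  have [w' [t [E X T]]] := decomp1 Hd.
  have [z zE] : {z | z = fcomp x w'} by exists (fcomp x w').
  have s1 : (exc z <= exc x + d.+1)%N by rewrite zE -X; apply: subadd.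
  have ey : y = fcomp z t.
    have : fcomp x (fcomp w' t) = y by rewrite E fcompKV.
    by rewrite zE /fcomp mulgA => ->.
  have s2 : (exc y <= exc z + 1)%N by rewrite {1}ey -T; apply: subadd.
  have lxz : le_exc x z by rewrite /le_exc {1}zE fcompK X; apply/eqP; lia.
  have lzy : le_exc z y.
    rewrite /le_exc {1}ey fcompK T; apply/eqP; lia.
  case: (Hmid z lxz lzy) => e.
    have : exc z = exc x by rewrite e.
    lia.
  have : exc z = exc y by rewrite e.
  lia.
split; first by [].
have top : forall m : {perm 'I_n}, le_exc m (long_cycle n).
  move=> m; rewrite /le_exc (cyc_id hn m).
  have := cyc_id hn 1; rewrite exc1 add0n /fcomp invg1 mulg1 => ->; by [].
have maxc : maximal_exc (long_cycle n).
  move=> y /eqP H; apply/esym/exc0_eq.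
  have ec : exc (long_cycle n) = n.-1.
    by have := cyc_id hn 1; rewrite exc1 add0n /fcomp invg1 mulg1.
  have := le_bound hn y; lia.
split; first exact: maxc.
by move=> m Hm; apply/esym/Hm/top.
Qed.
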